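(* For any configuration $G$, if $G$ is feasible then the algorithm Classifier outputs ''Yes'' when executed with $G$ as input.
   Context: Model. A configuration is a finite simple undirected connected graph $G$ with $n$ nodes, each node $v$ tagged with a non-negative integer $t_v$ (wakeup tag); smallest tag $0$, span $\sigma$ = largest tag. Nodes are anonymous and communicate in synchronous global rounds. A node $v$ wakes up in the first global round $r\le t_v$ in which it receives a message, if any, and otherwise in global round $t_v$; its local clock is $0$ in its wakeup round, it acts from local round $1$, and nodes do not know the global clock. In each round a node transmits a message to all neighbours, listens, or terminates. A listening node receives $M$ if exactly one neighbour transmits ($M$), hears collision noise (distinct from silence and messages) if at least two neighbours transmit, and silence otherwise; a transmitting node hears nothing. A DRIP is a common function mapping a node's history (what it heard in each local round $0,\ldots,i-1$, including whether/by which message it was woken) to its action in local round $i\ge1$, with every node eventually terminating permanently; a decision function maps each node's final history to $\{0,1\}$; a dedicated leader election algorithm for $G$ is a DRIP plus decision function such that exactly one node of $G$ outputs $1$; $G$ is feasible if one exists. Algorithm Classifier (centralized, input $G$): maintains a partition of the nodes into classes $\mathrm{class}(v)\in\{1,\ldots,\mathit{numClasses}\}$, initially all in class $1$. One iteration: for each node $v$, its label $L_v$ is the set of triples obtained as follows: for each neighbour $w$ with $\mathrm{class}(w)\ne\mathrm{class}(v)$ or $t_w\ne t_v$ form the pair $(\mathrm{class}(w),\sigma+1+t_w-t_v)$; for each distinct pair $(a,b)$ so formed, $L_v$ contains $(a,b,1)$ if exactly one neighbour yields it and $(a,b,* )$ otherwise. Then the partition is refined: two nodes share a new class iff they shared a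 class before and have equal labels. Main loop: for $i=1,\ldots,\lceil n/2\rceil$: record $\mathit{old}=\mathit{numClasses}$; do one iteration; if some class has exactly one node, output ''Yes'' and stop; else if the number of classes equals $\mathit{old}$, output ''No'' and stop. *)

(* Defs.v *)
From mathcomp Require Import all_boot.
Set Implicit Arguments. Unset Strict Implicit. Unset Printing Implicit Defensive.

Definition is_configuration (T : finType) (e : rel T) (t : T -> nat) : Prop :=
  [/\ symmetric e, irreflexive e, (forall x y : T, connect e x y)
    & exists v : T, t v = 0].

Definition span (T : finType) (t : T -> nat) : nat := \max_(v : T) t v.

(* What a node perceives in one local round: nothing (it transmitted),  *)
(* silence, collision noise, or a message.                              *)
Inductive obs (M : Type) : Type :=
  | ONothing | OSilence | ONoise | OMsg of M.
Arguments ONothing {M}. Arguments OSilence {M}. Arguments ONoise {M}.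

Inductive act (M : Type) : Type :=
  | ATransmit of M | AListen | ATerminate.
Arguments AListen {M}. Arguments ATerminate {M}.

(* A history is the sequence of observations of local rounds 0..i-1;   *)
(* entry 0 is what was heard in the wakeup round (a message iff the    *)
(* node was woken up by that message, or received it in round t_v).     *)
Definition history (M : Type) := seq (obs M).

Definition drip (M : Type) := history M -> act M.

Inductive nstate (M : Type) : Type :=
  | Asleep
  | Awake of history M
  | Done of history M.
Arguments Asleep {M}.

Definition transmits (M : Type) (A : drip M) (s : nstate M) : option M :=
  match s with
  | Awake h => match A h with ATransmit m => Some m | _ => None end
  | _ => None
  end.

Definition reception (T : finType) (M : Type) (e : rel T)
    (tx : T -> option M) (v : T) : obs M :=
  match pmap tx [seq w <- enum T | e v w] with
  | [::] => OSilence
  | [:: m] => OMsg m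
  | _ => ONoise
  end.

Definition step (T : finType) (M : Type) (e : rel T) (t : T -> nat)
    (A : drip M) (r : nat) (st : T -> nstate M) : T -> nstate M :=
  fun v =>
    let rc := reception e (fun w => transmits A (st w)) v in
    match st v with
    | Asleep =>
        if (r == t v) || (if rc is OMsg _ then true else false)
        then Awake [:: rc] else Asleep
    | Awake h =>
        match A h with
        | ATransmit _ => Awake (rcons h ONothing)
        | AListen => Awake (rcons h rc)
        | ATerminate => Done h
        end
    | Done h => Done h
    end.

Fixpoint exec (T : finType) (M : Type) (e : rel T) (t : T -> nat)
    (A : drip M) (r : nat) : T -> nstate M :=
  match r with
  | 0 => fun _ => Asleep
  | r'.+1 => step e t A r' (exec e t A r')
  end.

Definition dedicated_LE (T : finType) (e : rel T) (t : T -> nat)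
    (M : Type) (A : drip M) (dec : history M -> bool) : Prop :=
  exists (R : nat) (fh : T -> history M),
    (forall v, exec e t A R v = Done (fh v)) /\
    (exists! v : T, dec (fh v) = true).

Definition feasible (T : finType) (e : rel T) (t : T -> nat) : Prop :=
  exists (M : Type) (A : drip M) (dec : history M -> bool),
    dedicated_LE e t A dec.

(* Algorithm Classifier.  A class is named by the block of the         *)
(* partition (a {set T}); class v = block containing v.                *)
(* Label triples (a, b, star) : star = false means "1", true means "*". *)

Definition labK (T : finType) (t : T -> nat) : nat := (span t).*2.+2.

Definition label (T : finType) (e : rel T) (t : T -> nat)
    (cls : T -> {set T}) (v : T) : {set {set T} * 'I_(labK t) * bool} :=
  [set x : {set T} * 'I_(labK t) * bool | let: (a, b, star) := x in
     let c := #|[set w | [&& e v w, (cls w != cls v) || (t w != t v),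
                            cls w == a & (span t).+1 + t w - t v == val b]]| in
     (0 < c) && (star == (1 < c))].

Definition refine (T : finType) (e : rel T) (t : T -> nat)
    (cls : T -> {set T}) : T -> {set T} :=
  fun v => [set w | (cls w == cls v) && (label e t cls w == label e t cls v)].

Definition numClasses (T : finType) (cls : T -> {set T}) : nat :=
  #|[set cls v | v : T]|.

Definition has_singleton_class (T : finType) (cls : T -> {set T}) : bool :=
  [exists v : T, #|cls v| == 1].

(* k remaining iterations of the main loop; true = "Yes", false = "No". *)
(* (Falling out of the loop is read as "No"; it cannot happen.)         *)
Fixpoint classifier_loop (T : finType) (e : rel T) (t : T -> nat)
    (k : nat) (cls : T -> {set T}) : bool :=
  match k with
  | 0 => false
  | k'.+1 =>
      let old := numClasses cls in
      let cls' := refine e t cls in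
      if has_singleton_class cls' then true
      else if numClasses cls' == old then false
      else classifier_loop e t k' cls'
  end.

Definition classifier (T : finType) (e : rel T) (t : T -> nat) : bool :=
  classifier_loop e t (uphalf #|T|) (fun _ => [set: T]).

(* Main.v *)
Require Import Defs.
From mathcomp Require Import all_boot.
From mathcomp Require Import zify.
From Stdlib Require Import Classical.
Set Implicit Arguments. Unset Strict Implicit. Unset Printing Implicit Defensive.

Definition stable (T : finType) (e : rel T) (t : T -> nat) (c : T -> {set T}) :=
  forall u v, c u = c v -> label e t c u = label e t c v.

Definition nbset (T : finType) (e : rel T) (t : T -> nat) (c : T -> {set T})
  (z : T) (a : {set T}) (k : nat) : {set T} :=
  [set w | [&& e z w, (c w != c z) || (t w != t z), c w == a
             & (span t).+1 + t w - t z == k]].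

Lemma in_label (T : finType) (e : rel T) (t : T -> nat) c z a b s :
  ((a, b, s) \in label e t c z) =
  (0 < #|nbset e t c z a (val b)|) && (s == (1 < #|nbset e t c z a (val b)|)).
Proof. by rewrite inE. Qed.

Lemma tag_le_span (T : finType) (t : T -> nat) v : t v <= span t.
Proof. by rewrite /span; apply: (@leq_bigmax _ (fun v => t v) v). Qed.

Lemma nbset_transfer (T : finType) (e : rel T) (t : T -> nat) c x y a k :
  stable e t c -> c x = c y -> forall hk : k < labK t,
  0 < #|nbset e t c x a k| ->
  0 < #|nbset e t c y a k| /\ (1 < #|nbset e t c x a k|) = (1 < #|nbset e t c y a k|).
Proof.
move=> st cxy hk h.
have L := st _ _ cxy.
have : (a, Ordinal hk, 1 < #|nbset e t c x a k|) \in label e t c x.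
  by rewrite in_label /= h eqxx.
by rewrite L in_label /= => /andP [h1 /eqP h2].
Qed.

Lemma labK_bound (T : finType) (t : T -> nat) w x :
  (span t).+1 + t w - t x < labK t.
Proof. rewrite /labK; have := tag_le_span t w; lia. Qed.

Lemma partner_step (T : finType) (e : rel T) (t : T -> nat) c d x x' w :
  stable e t c -> c x' = c x -> t x' + d = t x -> e x w ->
  exists w', c w' = c w /\ t w' + d = t w.
Proof.
move=> st cx'x htx exw.
case: (boolP ((c w != c x) || (t w != t x))) => hw.
- have hk := labK_bound t w x.
  have hin : 0 < #|nbset e t c x (c w) ((span t).+1 + t w - t x)|.
    by apply/card_gt0P; exists w; rewrite inE exw hw !eqxx.
  have [h1 _] := nbset_transfer st (esym cx'x) hk hin.
  case/card_gt0P: h1 => w'; rewrite inE => /and4P [_ _ /eqP hc /eqP hk'].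
  exists w'; split => //.
  have := tag_le_span t x'; have := tag_le_span t x; have := tag_le_span t w;
  have := tag_le_span t w'; lia.
- move: hw; rewrite negb_or !negbK => /andP [/eqP hc /eqP ht].
  exists x'; split; [by rewrite cx'x hc | lia].
Qed.

Lemma same_tag (T : finType) (e : rel T) (t : T -> nat) c a b :
  is_configuration e t -> stable e t c -> c a = c b -> t a = t b.
Proof.
move=> [_ _ conn [z tz]] st.
have key : forall a b, c a = c b -> t a <= t b -> t a = t b.
  move=> a0 b0 hab hle.
  set d := t b0 - t a0.
  have Q : forall x, exists x', c x' = c x /\ t x' + d = t x.
    move=> x; have /connectP [p pth ->] := conn b0 x.
    have Hb : exists y', c y' = c b0 /\ t y' + d = t b0.
      by exists a0; split => //; rewrite /d; lia.
    clearbody d; elim: p b0 pth Hb {hab hle} => [|w p IH] y //= /andP [eyw pth] [y' [h1 h2]].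
    apply: IH pth _; exact: partner_step st h1 h2 eyw.
  case: (Q z) => z' [_ h]; rewrite tz /d in h; lia.
move=> hab; case: (leqP (t a) (t b)) => h; first exact: key.
by symmetry; apply: key (esym hab) (ltnW h).
Qed.

Lemma pmap_none (T : eqType) (M : Type) (tx : T -> option M) (s : seq T) :
  (forall w, w \in s -> tx w = None) -> pmap tx s = [::].
Proof.
elim: s => //= y s IH H.
rewrite H ?mem_head //= IH // => w hw; apply: H; by rewrite in_cons hw orbT.
Qed.

Lemma pmap_one (T : eqType) (M : Type) (tx : T -> option M) (s : seq T) w m :
  uniq s -> w \in s -> tx w = Some m ->
  (forall w', w' \in s -> isSome (tx w') -> w' = w) -> pmap tx s = [:: m].
Proof.
elim: s => //= y s IH /andP [ny us] win tw H.
case: (y =P w) => [eyw | nyw].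
- subst y; rewrite tw /= pmap_none // => w' hw'.
  case e': (tx w') => [m'|] //.
  have := H w'; rewrite in_cons hw' orbT e' => /(_ isT isT) ew'.
  by subst; rewrite hw' in ny.
- have ty : tx y = None.
    case e': (tx y) => [m'|] //.
    by have := H y (mem_head _ _); rewrite e' => /(_ isT).
  rewrite ty /=; apply: IH => //.
    move: win; rewrite in_cons => /orP [/eqP ?|//]; subst; by case: nyw.
  by move=> w' hw' hs; apply: H => //; rewrite in_cons hw' orbT.
Qed.

Lemma pmap_two (T : eqType) (M : Type) (tx : T -> option M) (s : seq T) w1 w2 :
  w1 != w2 -> w1 \in s -> w2 \in s -> isSome (tx w1) -> isSome (tx w2) ->
  1 < size (pmap tx s).
Proof.
move=> ne i1 i2 s1 s2.
rewrite size_pmap -size_filter.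
have u : uniq [:: w1; w2] by rewrite /= inE ne.
apply: (uniq_leq_size u) => x; rewrite !inE => /orP [/eqP->|/eqP->];
  by rewrite mem_filter ?s1 ?s2.
Qed.

Lemma mem_nb (T : finType) (e : rel T) v w :
  (w \in [seq w <- enum T | e v w]) = e v w.
Proof. by rewrite mem_filter enumT mem_index_enum andbT. Qed.

Lemma rec_none (T : finType) (M : Type) (e : rel T) (tx : T -> option M) v :
  (forall w, e v w -> tx w = None) -> reception e tx v = OSilence.
Proof.
move=> H; rewrite /reception pmap_none // => w.
rewrite mem_filter => /andP [h _]; exact: H.
Qed.

Lemma rec_two (T : finType) (M : Type) (e : rel T) (tx : T -> option M) v w1 w2 :
  w1 != w2 -> e v w1 -> e v w2 -> isSome (tx w1) -> isSome (tx w2) ->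
  reception e tx v = ONoise.
Proof.
move=> ne e1 e2 s1 s2; rewrite /reception.
have := @pmap_two T M tx [seq w <- enum T | e v w] w1 w2 ne.
rewrite !mem_nb e1 e2 => /(_ isT isT s1 s2).
by case: (pmap tx _) => [|a [|b r]].
Qed.

Lemma rec_one (T : finType) (M : Type) (e : rel T) (tx : T -> option M) v w m :
  e v w -> tx w = Some m ->
  (forall w', e v w' -> isSome (tx w') -> w' = w) -> reception e tx v = OMsg m.
Proof.
move=> ew tw H; rewrite /reception (@pmap_one T M tx _ w m) //.
- exact/filter_uniq/enum_uniq.
- by rewrite mem_nb ew.
- by move=> w'; rewrite mem_filter => /andP [h _]; apply: H.
Qed.

Lemma rec_eq (T : finType) (e : rel T) (t : T -> nat) (M : Type)
  (tx : T -> option M) c x y :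
  is_configuration e t -> stable e t c ->
  (forall w1 w2, c w1 = c w2 -> tx w1 = tx w2) -> c x = c y -> tx x = None ->
  reception e tx x = reception e tx y.
Proof.
move=> conf st txc cxy tx0.
have T1 : forall x y, c x = c y -> tx x = None -> forall w m, e x w -> tx w = Some m ->
    exists w', e y w' /\ c w' = c w.
  move=> x0 y0 cxy0 tx00 w m exw txw.
  have cwx : c w != c x0 by apply/eqP => h; rewrite (txc _ _ h) tx00 in txw.
  have hk := labK_bound t w x0.
  have hin : 0 < #|nbset e t c x0 (c w) ((span t).+1 + t w - t x0)|.
    by apply/card_gt0P; exists w; rewrite inE exw cwx !eqxx.
  have [h1 _] := nbset_transfer st cxy0 hk hin.
  case/card_gt0P: h1 => w'; rewrite inE => /and4P [eyw' _ /eqP cw' _].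
  by exists w'.
pose Two z := exists w1 w2, [/\ w1 != w2, e z w1, e z w2, isSome (tx w1) & isSome (tx w2)].
have T2 : forall x y, c x = c y -> tx x = None -> Two x -> Two y.
  move=> x0 y0 cxy0 tx00 [w1 [w2 [ne e1 e2 s1 s2]]].
  case: (c w1 =P c w2) => [c12 | c12].
  - have t12 := same_tag conf st c12.
    have cwx : c w1 != c x0 by apply/eqP => h; rewrite (txc _ _ h) tx00 in s1.
    have hk := labK_bound t w1 x0.
    have hin2 : 1 < #|nbset e t c x0 (c w1) ((span t).+1 + t w1 - t x0)|.
      apply/card_gt1P; exists w1, w2; rewrite !inE e1 e2 -c12 cwx t12 !eqxx ne.
      by [].
    have hin : 0 < #|nbset e t c x0 (c w1) ((span t).+1 + t w1 - t x0)|.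
      exact: ltn_trans hin2.
    have [_ h2] := nbset_transfer st cxy0 hk hin.
    rewrite h2 in hin2; case/card_gt1P: hin2 => w1' [w2' [h1' h2' ne']].
    move: h1' h2'; rewrite !inE => /and4P [ey1 _ /eqP c1 _] /and4P [ey2 _ /eqP c2 _].
    exists w1', w2'; split => //; first by rewrite (txc _ _ c1).
    by rewrite (txc _ _ c2).

  - case E1: (tx w1) s1 => [m1|] // _; case E2: (tx w2) s2 => [m2|] // _.
    have [w1' [ey1 c1]] := T1 _ _ cxy0 tx00 _ _ e1 E1.
    have [w2' [ey2 c2]] := T1 _ _ cxy0 tx00 _ _ e2 E2.
    exists w1', w2'; split => //.
    + by apply/eqP => h; apply: c12; rewrite -c1 -c2 h.
    + by rewrite (txc _ _ c1) E1.
    + by rewrite (txc _ _ c2) E2.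
have tyN : tx y = None by rewrite -(txc _ _ cxy).
case: (classic (Two x)) => h2.
  have [w1 [w2 [ne e1 e2 s1 s2]]] := h2.
  have [w1' [w2' [ne' e1' e2' s1' s2']]] := T2 _ _ cxy tx0 h2.
  by rewrite (rec_two ne e1 e2 s1 s2) (rec_two ne' e1' e2' s1' s2').
have n2y : ~ Two y by move=> h; apply: h2; exact: T2 (esym cxy) tyN h.
case: (pickP [pred w | e x w && isSome (tx w)]) => [w /andP [exw sw] | none].
  case E: (tx w) sw => [m|] // _.
  have [w' [eyw' cw']] := T1 _ _ cxy tx0 _ _ exw E.
  have E' : tx w' = Some m by rewrite (txc _ _ cw').
  rewrite (rec_one exw E); last first.
    move=> w'' ex'' s''; case: (w'' =P w) => // ne; exfalso; apply: h2.
    by exists w'', w; split => //; [apply/eqP | rewrite E].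
  rewrite (rec_one eyw' E') //.
  move=> w'' ey'' s''; case: (w'' =P w') => // ne; exfalso; apply: n2y.
  by exists w'', w'; split => //; [apply/eqP | rewrite E'].
rewrite !rec_none //.
  move=> w eyw; case E: (tx w) => [m|] //.
  have [w' [exw' cw']] := T1 _ _ (esym cxy) tyN _ _ eyw E.
  have := none w'; rewrite /= exw' (txc _ _ cw') E; by [].
move=> w exw; have := none w; rewrite /= exw; by case: (tx w).
Qed.

Lemma sim (T : finType) (e : rel T) (t : T -> nat) (M : Type) (A : drip M) c :
  is_configuration e t -> stable e t c ->
  forall r u v, c u = c v -> exec e t A r u = exec e t A r v.
Proof.
move=> conf st; elim => [//|r IH] u v cuv /=.
rewrite /step (IH u v cuv).
have tuv := same_tag conf st cuv.
have R : transmits A (exec e t A r v) = None ->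
    reception e (fun w => transmits A (exec e t A r w)) u =
    reception e (fun w => transmits A (exec e t A r w)) v.
  move=> h; apply: (rec_eq conf st) => //.
    by move=> w1 w2 h12; rewrite (IH _ _ h12).
  by rewrite (IH u v cuv).
case E: (exec e t A r v) R => [|h|h] R //.
- by rewrite R ?tuv.
- case Ah: (A h) => [m| |] //.
  by rewrite R //= Ah.
Qed.

Definition Pc (T : finType) (c : T -> {set T}) := forall u v, (u \in c v) = (c u == c v).

Lemma P_refine (T : finType) (e : rel T) (t : T -> nat) c : Pc (refine e t c).
Proof.
move=> u v; rewrite /refine inE; apply/idP/eqP.
- move=> /andP [/eqP h1 /eqP h2]; apply/setP => w; by rewrite !inE h1 h2.
- move=> h.
  have : u \in [set w | (c w == c u) && (label e t c w == label e t c u)].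
    by rewrite inE !eqxx.
  by rewrite h inE.
Qed.

Lemma refine_sub (T : finType) (e : rel T) (t : T -> nat) c u v :
  u \in refine e t c v -> c u = c v.
Proof. by rewrite inE => /andP [/eqP]. Qed.

Lemma refine_self (T : finType) (e : rel T) (t : T -> nat) c v :
  v \in refine e t c v.
Proof. by rewrite inE !eqxx. Qed.

Lemma num_img (T : finType) (e : rel T) (t : T -> nat) c :
  let h := fun X : {set T} => \bigcup_(x in X) c x in
  [set c v | v : T] = h @: [set refine e t c v | v : T] /\
  forall v, h (refine e t c v) = c v.
Proof.
move=> h.
have hc : forall v, h (refine e t c v) = c v.
  move=> v; apply/setP => y; apply/bigcupP/idP => [[x xin yin] | yin].
    by rewrite -(refine_sub xin).
  by exists v => //; exact: refine_self.
split => //.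
by rewrite -imset_comp; apply: eq_imset => v /=; rewrite hc.
Qed.

Lemma num_le (T : finType) (e : rel T) (t : T -> nat) c :
  numClasses c <= numClasses (refine e t c).
Proof.
have [img _] := num_img e t c.
by rewrite /numClasses img; apply: leq_imset_card.
Qed.

Lemma num_eq (T : finType) (e : rel T) (t : T -> nat) c u v :
  numClasses (refine e t c) = numClasses c -> c u = c v ->
  refine e t c u = refine e t c v.
Proof.
have [img hc] := num_img e t c.
rewrite /numClasses img => /esym/eqP/imset_injP inj cuv.
by apply: inj; rewrite ?imset_f // !hc.
Qed.

Lemma card_bound (T : finType) (c : T -> {set T}) :
  Pc c -> (forall v, 1 < #|c v|) -> 2 * numClasses c <= #|T|.
Proof.
move=> Pc0 H.
set P := [set c v | v : T].
have part : partition P [set: T].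
  apply/and3P; split.
  - apply/eqP/setP => x; rewrite inE /cover; apply/bigcupP; exists (c x).
      exact: imset_f.
    by rewrite Pc0.
  - apply/trivIsetP => A B /imsetP [a _ ->] /imsetP [b _ ->] ne.
    rewrite -setI_eq0; apply/eqP/setP => x; rewrite !inE.
    apply/negP => /andP [xa xb]; rewrite !Pc0 in xa xb.
    by move/negP: ne; apply; rewrite -(eqP xa) (eqP xb).
  - apply/imsetP => [[v _ h]]; have := Pc0 v v; rewrite eqxx -h inE; by [].
have := card_partition part; rewrite cardsT => ->.
rewrite mulnC -sum_nat_const; apply: leq_sum => A /imsetP [v _ ->]; exact: H.
Qed.

Lemma two_of_nosingle (T : finType) (c : T -> {set T}) v :
  Pc c -> #|c v| != 1 -> 1 < #|c v|.
Proof.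
move=> Pc0 n1.
have : 0 < #|c v| by apply/card_gt0P; exists v; rewrite Pc0.
lia.
Qed.

Lemma loop_false (T : finType) (e : rel T) (t : T -> nat) k c :
  Pc c -> (k = 0 -> ~~ has_singleton_class c) ->
  #|T| < 2 * (numClasses c + k) -> classifier_loop e t k c = false ->
  exists c0, [/\ Pc c0, stable e t c0 & forall v, 1 < #|c0 v|].
Proof.
elim: k c => [|k IH] c Pc0 hs hn /=.
- move=> _; exfalso.
  have ns := hs erefl.
  have all2 : forall v, 1 < #|c v|.
    move=> v; apply: two_of_nosingle => //.
    by apply/negP => h; move/negP: ns; apply; apply/existsP; exists v.
  have := card_bound Pc0 all2; lia.
- case: ifP => // hs'.
  case: ifP => [/eqP heq _ | hneq hl].
  + exists c; split => //.
    * move=> u v cuv; have h := num_eq heq cuv.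
      have : u \in refine e t c v by rewrite -h refine_self.
      by rewrite inE => /andP [_ /eqP].
    * move=> v.
      have sub : refine e t c v \subset c v.
        by apply/subsetP => w /refine_sub hw; rewrite Pc0 hw.
      apply: leq_trans (subset_leq_card sub).
      apply: two_of_nosingle; first exact: P_refine.
      by apply/negP => h; move/negbT/negP: hs'; apply; apply/existsP; exists v.
  + apply: (IH (refine e t c)) => //.
    * exact: P_refine.
    * by move=> _; rewrite hs'.
    * have := num_le e t c; move/negbT: hneq; lia.
Qed.

Theorem lemma12 (T : finType) (e : rel T) (t : T -> nat) :
  is_configuration e t -> feasible e t -> classifier e t = true.
Proof.
move=> conf [M [A [dec [R [fh [hR [v [hv huniq]]]]]]]].
case hc: (classifier e t) => //.
have [_ _ _ [z tz]] := conf.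
have n0 : 0 < #|T| by apply/card_gt0P; exists z.
have [c0 [Pc0 st0 big0]] : exists c0, [/\ Pc c0, stable e t c0 & forall v, 1 < #|c0 v|].
  apply: (loop_false (k := uphalf #|T|) (c := fun _ => [set: T])) => //.
  - by move=> u w; rewrite !inE eqxx.
  - move=> h; exfalso; move: h; rewrite uphalf_half.
    have := odd_double_half #|T|; lia.
  - have h1 : 0 < numClasses (fun _ : T => [set: T]).
      by apply/card_gt0P; exists [set: T]; apply/imsetP; exists z.
    rewrite uphalf_half; have := odd_double_half #|T|; lia.
have [x [y [hx hy nxy]]] := card_gt1P (big0 v).
have [u [hu nuv]] : exists u, u \in c0 v /\ u != v.
  case: (x =P v) => [exv | nxv]; last by exists x; split => //; apply/eqP.
  by exists y; split => //; rewrite -exv eq_sym.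
rewrite Pc0 in hu.
have := sim A conf st0 R (eqP hu); rewrite !hR => [[fuv]].
have := huniq u; rewrite fuv hv => /(_ erefl) euv.
by rewrite euv eqxx in nuv.
Qed.
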